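(* Let $0<a<1$ and let $(\mathbf X_j)_{j\ge0}$ be the persistent random walk on $\mathbb Z$ with persistence parameter $a$ started at $\mathbf X_0=0$, with law $P_a$. Let $\mathbf L:=\inf\{j\ge1:\mathbf X_j=0\}$, and let $\mathbf R$ and $\mathbf U$ be the numbers of runs and of long runs of the excursion path $\mathbf X_0,\dots,\mathbf X_{\mathbf L}$. Then for all integers $n\ge2$ and $k,\ell\ge0$, $$(1-a)P_a(\mathbf L=2n,\mathbf R=2k,\mathbf U=\ell)=a\,P_{1-a}(\mathbf L=2n,\mathbf L-\mathbf R=2k,\mathbf U=\ell).$$ Moreover, for $a=\frac12$ and all real $r,s,t$, $$E\{e^{ir\mathbf R}e^{is\mathbf U}e^{it\mathbf L}\}-E\{e^{ir(\mathbf L-\mathbf R)}e^{is\mathbf U}e^{it\mathbf L}\}=\tfrac12e^{2it}(e^{2ir}-1).$$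
   Context: The persistent random walk with parameter $a$: increments $\varepsilon_j=\mathbf X_j-\mathbf X_{j-1}\in\{\pm1\}$, $P(\varepsilon_1=1)=P(\varepsilon_1=-1)=\frac12$, and for $j\ge1$ the next increment equals the previous one with probability $a$ and is reversed with probability $1-a$. For a nearest-neighbour path, a run is a maximal block of consecutive steps that are all $+1$ or all $-1$; its length is its number of steps; a long run is a run of length at least $2$. *)

(* Defs.v *)
From Stdlib Require Import Reals ZArith Arith List Bool.
From Coquelicot Require Import Coquelicot.
Import ListNotations.
Open Scope R_scope.

(** Increment sequences: [true] = +1, [false] = -1.
    [bools m] enumerates all {+1,-1}-sequences of length m (each once). *)
Fixpoint bools (m : nat) : list (list bool) :=
  match m with
  | O => [[]]
  | S m' => map (cons true) (bools m') ++ map (cons false) (bools m')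
  end.

(** Law of the persistent random walk with parameter a on the first
    (length e) increments:  P_a(eps_1..eps_m = e) =
    1/2 * prod_{j>=2} (a if eps_j = eps_{j-1} else 1-a). *)
Fixpoint wt_aux (a : R) (prev : bool) (e : list bool) : R :=
  match e with
  | [] => 1
  | b :: r => (if Bool.eqb b prev then a else 1 - a) * wt_aux a b r
  end.

Definition weight (a : R) (e : list bool) : R :=
  match e with
  | [] => 1
  | b :: r => / 2 * wt_aux a b r
  end.

(** P_a(A) for an event A determined by the first m increments. *)
Definition Pfin (a : R) (m : nat) (A : list bool -> bool) : R :=
  fold_right Rplus 0
    (map (fun e => if A e then weight a e else 0) (bools m)).

Fixpoint first_ret_aux (x : Z) (e : list bool) : bool :=
  match e with
  | [] => false
  | b :: r =>
      let y := (x + (if b then 1 else -1))%Z in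
      if Z.eqb y 0 then (match r with [] => true | _ => false end)
      else first_ret_aux y r
  end.

(** [excursion e]: L = inf{j>=1 : X_j = 0} equals length e (X_0 = 0). *)
Definition excursion (e : list bool) : bool := first_ret_aux 0 e.

Fixpoint rl_aux (cur : bool) (len : nat) (e : list bool) : list nat :=
  match e with
  | [] => [len]
  | b :: r => if Bool.eqb b cur then rl_aux cur (S len) r
              else len :: rl_aux b 1 r
  end.

Definition run_lengths (e : list bool) : list nat :=
  match e with
  | [] => []
  | b :: r => rl_aux b 1 r
  end.

Definition runs (e : list bool) : nat := length (run_lengths e).
Definition longruns (e : list bool) : nat :=
  length (filter (fun k => Nat.leb 2 k) (run_lengths e)).

Definition expi (x : R) : C := (cos x, sin x).

(** m-th term of E{ f(excursion) } = sum_m E{ f ; L = m }: the sum over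
    excursion paths of length m of P_a(path) * f(path). *)
Definition Eterm (a : R) (f : list bool -> C) (m : nat) : C :=
  fold_right Cplus (RtoC 0)
    (map (fun e => if excursion e then Cmult (RtoC (weight a e)) (f e)
                   else RtoC 0) (bools m)).

(* Main.v *)
Require Import Defs.
From Stdlib Require Import Reals ZArith Arith List Bool Lia Lra Permutation.
From Coquelicot Require Import Coquelicot.
Import ListNotations.
Open Scope R_scope.

Definition flag (x : bool) (r : list bool) : bool :=
  match r with [] => true | y :: _ => negb (Bool.eqb x y) end.
Fixpoint fsel (c : bool) (e : list bool) : list bool :=
  match e with [] => [] | x :: r => if Bool.eqb x c then flag x r :: fsel c r else fsel c r end.
Fixpoint Tr (e : list bool) : list bool :=
  match e with [] => [] | x :: r => flag x r :: Tr r end.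
Fixpoint cnt (l : list bool) : nat :=
  match l with [] => 0 | b :: r => (if b then 1 else 0) + cnt r end%nat.
Fixpoint ft (l : list bool) : nat :=
  match l with [] => 0
  | b :: r => ((if b then 0 else match r with c :: _ => if c then 1 else 0 | [] => 0 end) + ft r)%nat
  end.

Lemma Tr_length : forall e, length (Tr e) = length e.
Proof. induction e; simpl; auto. Qed.

Lemma cnt_le : forall l, (cnt l <= length l)%nat.
Proof. induction l as [|b l IH]; simpl; [lia|destruct b; lia]. Qed.

Lemma cnt_app : forall l m, cnt (l ++ m) = (cnt l + cnt m)%nat.
Proof. induction l as [|b l IH]; intros; simpl; [auto| rewrite IH; lia]. Qed.

Lemma cnt_map_negb : forall l, cnt (map negb l) = (length l - cnt l)%nat.
Proof. induction l as [|b l IH]; [reflexivity|]. pose proof (cnt_le l). destruct b; cbn [map cnt negb length]; rewrite IH; lia. Qed.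

Lemma rl_aux_length : forall r cur len, length (rl_aux cur len r) = cnt (Tr (cur :: r)).
Proof.
  induction r as [|y r IH]; intros cur len; simpl; auto.
  destruct y, cur; simpl; rewrite ?IH; simpl; auto.
Qed.

Definition b2n (b : bool) : nat := if b then 1%nat else 0%nat.

Lemma rl_aux_long : forall r cur len, (1 <= len)%nat ->
  length (filter (fun k => Nat.leb 2 k) (rl_aux cur len r)) =
  (ft (Tr (cur :: r)) + b2n (Nat.leb 2 len && flag cur r))%nat.
Proof.
  induction r as [|y r IH]; intros cur len Hl.
  - destruct len as [|[|len]]; [lia|reflexivity|reflexivity].
  - change (rl_aux cur len (y :: r)) with
      (if Bool.eqb y cur then rl_aux cur (S len) r else len :: rl_aux y 1 r).
    change (Tr (cur :: y :: r)) with (flag cur (y :: r) :: Tr (y :: r)).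
    destruct (Bool.eqb y cur) eqn:E.
    + apply Bool.eqb_prop in E; subst y.
      rewrite IH by lia.
      replace (flag cur (cur :: r)) with false by (destruct cur; reflexivity).
      destruct len as [|len]; [lia|].
      replace (Nat.leb 2 (S (S len))) with true by (simpl; auto).
      rewrite Bool.andb_false_r. cbn [ft Tr b2n].
      destruct (flag cur r); simpl; lia.
    + assert (Hf : flag cur (y :: r) = true).
      { unfold flag. destruct y, cur; simpl in *; auto; discriminate. }
      rewrite Hf. specialize (IH y 1%nat ltac:(lia)).
      rewrite Bool.andb_true_r. rewrite Bool.andb_false_l in IH.
      destruct len as [|[|len]]; [lia| |]; simpl in *; lia.
Qed.

Lemma runs_Tr : forall e, runs e = cnt (Tr e).
Proof.
  intros [|x r]; [reflexivity|]. unfold runs, run_lengths. apply rl_aux_length.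
Qed.

Lemma longruns_Tr : forall e, longruns e = ft (Tr e).
Proof.
  intros [|x r]; [reflexivity|]. unfold longruns, run_lengths.
  rewrite rl_aux_long by lia. simpl. lia.
Qed.

Lemma len_split : forall e, (length (fsel true e) + length (fsel false e))%nat = length e.
Proof. induction e as [|x r IH]; simpl; auto. destruct x; simpl; lia. Qed.

Lemma cnt_split : forall e, (cnt (fsel true e) + cnt (fsel false e))%nat = cnt (Tr e).
Proof. induction e as [|x r IH]; simpl; auto. destruct x; simpl; lia. Qed.

Lemma hd_fsel : forall x r, fsel x (x :: r) = flag x r :: fsel x r.
Proof. intros [] r; reflexivity. Qed.

Lemma ft_split : forall e, (ft (fsel true e) + ft (fsel false e))%nat = ft (Tr e).
Proof.
  induction e as [|x r IH]; simpl; auto.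
  destruct r as [|y r]; [destruct x; simpl; auto|].
  destruct x, y; simpl in *; lia.
Qed.

Lemma fsel_last : forall c e, fsel c e <> [] -> last (fsel c e) false = true.
Proof.
  intros c e. induction e as [|x r IH]; simpl; [congruence|].
  destruct (Bool.eqb x c) eqn:E; [|exact IH].
  intros _. destruct (fsel c r) as [|z l] eqn:Ef.
  - simpl. destruct r as [|y r']; [reflexivity|].
    unfold flag. apply Bool.eqb_prop in E; subst x.
    destruct (Bool.eqb c y) eqn:E2; [|reflexivity].
    apply Bool.eqb_prop in E2; subst y. simpl in Ef. rewrite Bool.eqb_reflx in Ef. discriminate.
  - change (last (flag x r :: z :: l) false = true). simpl. rewrite <- IH by discriminate. reflexivity.
Qed.

Lemma last_indep : forall (l : list bool) d d', l <> [] -> last l d = last l d'.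
Proof. induction l as [|a l IH]; intros d d' H; [congruence|]. destruct l; [reflexivity|]. simpl. apply IH. discriminate. Qed.

Lemma cnt_ends : forall r x,
  (cnt (fsel true (x :: r)) + b2n (negb x) = cnt (fsel false (x :: r)) + b2n (last (x :: r) x))%nat.
Proof.
  induction r as [|y r IH]; intros x.
  - destruct x; reflexivity.
  - specialize (IH y). change (last (x :: y :: r) x) with (last (y :: r) x).
    replace (last (y :: r) x) with (last (y :: r) y) by (apply last_indep; discriminate).
    destruct x, y; simpl in *; lia.
Qed.

Definition G (h : nat) (c : bool) (fa fb : list bool) : Prop :=
  forall t, (1 <= t)%nat -> (t < length fb)%nat -> (h <= t)%nat ->
    (cnt (firstn (t - h) fa) + b2n (negb c) <= cnt (firstn (t - 1) fb))%nat.

Lemma G_U : forall h y fa fb, G h true (negb y :: fa) fb <-> G (S h) y fa fb.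
Proof.
  intros h y fa fb; unfold G; split; intros H t H1 H2 H3.
  - specialize (H t H1 H2 ltac:(lia)).
    replace (t - h)%nat with (S (t - S h)) in H by lia.
    simpl in H. destruct y; simpl in *; lia.
  - destruct (Nat.eq_dec t h) as [->|Hne].
    + rewrite Nat.sub_diag. simpl. lia.
    + specialize (H t H1 H2 ltac:(lia)).
      replace (t - h)%nat with (S (t - S h)) by lia.
      simpl. destruct y; simpl in *; lia.
Qed.

Lemma G_D : forall h y fa fb, (2 <= h)%nat -> (G h false fa (y :: fb) <-> G (h - 1) y fa fb).
Proof.
  intros h y fa fb Hh; unfold G; split; intros H t H1 H2 H3.
  - specialize (H (S t) ltac:(lia) ltac:(simpl; lia) ltac:(lia)).
    replace (S t - h)%nat with (t - (h - 1))%nat in H by lia.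
    replace (S t - 1)%nat with (S (t - 1)) in H by lia.
    simpl in H. destruct y; simpl in *; lia.
  - simpl in H2.
    specialize (H (t - 1)%nat ltac:(lia) ltac:(lia) ltac:(lia)).
    replace (t - h)%nat with (t - 1 - (h - 1))%nat by lia.
    replace (t - 1)%nat with (S (t - 1 - 1)) at 2 by lia.
    simpl. destruct y; simpl in *; lia.
Qed.

Lemma char : forall e h, (1 <= h)%nat \/ hd false e = true ->
  (first_ret_aux (Z.of_nat h) e = true <->
   (e <> [] /\ (h + length (fsel true e) = length (fsel false e))%nat /\
    G h (hd false e) (fsel true e) (fsel false e))).
Proof.
  induction e as [|x r IH]; intros h Hpre.
  - simpl. split; [discriminate| intros [H _]; congruence].
  - destruct x.
    + simpl first_ret_aux.
      replace (Z.of_nat h + 1)%Z with (Z.of_nat (S h)) by lia.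
      replace (Z.of_nat (S h) =? 0)%Z with false by (symmetry; apply Z.eqb_neq; lia).
      assert (Hs : (1 <= S h)%nat) by lia. rewrite (IH (S h) (or_introl Hs)).
      change (fsel true (true :: r)) with (flag true r :: fsel true r).
      change (fsel false (true :: r)) with (fsel false r).
      destruct r as [|y r'].
      * simpl. split; [intros [H _]; congruence| intros [_ [H _]]; lia].
      * replace (flag true (y :: r')) with (negb y) by (destruct y; reflexivity).
        simpl hd. rewrite G_U. simpl length.
        split; intros [_ [H1 H2]]; (split; [discriminate|split; [lia|exact H2]]).
    + simpl in Hpre. destruct Hpre as [Hh|Hh]; [|discriminate].
      simpl first_ret_aux.
      change (fsel true (false :: r)) with (fsel true r).
      change (fsel false (false :: r)) with (flag false r :: fsel false r).
      simpl hd.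
      destruct (Nat.eq_dec h 1) as [->|Hne].
      * simpl. pose proof (len_split r).
        destruct r as [|y r'].
        -- split; [intros _; split; [discriminate|split; [reflexivity|]]|reflexivity].
           intros t H1 H2 H3. simpl in H2. lia.
        -- split; [discriminate|]. intros [_ [H1 H2]].
           exfalso. cbn [length] in H. refine (_ (H2 1%nat _ _ _)); [simpl; lia|lia|cbn [length]; lia|lia].
      * replace (Z.of_nat h + -1)%Z with (Z.of_nat (h - 1)) by lia.
        replace (Z.of_nat (h - 1) =? 0)%Z with false by (symmetry; apply Z.eqb_neq; lia).
        assert (Hs : (1 <= h - 1)%nat) by lia. rewrite (IH (h - 1)%nat (or_introl Hs)).
        destruct r as [|y r'].
        -- simpl. split; [intros [H _]; congruence| intros [_ [H _]]; lia].
        -- replace (flag false (y :: r')) with y by (destruct y; reflexivity).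
           rewrite G_D by lia. simpl length. simpl hd.
           split; intros [_ [H1 H2]]; (split; [discriminate|split; [lia|exact H2]]).
Qed.

Fixpoint mrg (k : nat) (c : bool) (fa fb : list bool) : list bool :=
  match k with
  | O => []
  | S k' =>
    if c then match fa with [] => [] | f :: fa' => true :: mrg k' (negb f) fa' fb end
    else match fb with [] => [] | g :: fb' => false :: mrg k' g fa fb' end
  end.

Lemma mrg_flags : forall r x k, (length (x :: r) <= k)%nat ->
  mrg k x (fsel true (x :: r)) (fsel false (x :: r)) = x :: r.
Proof.
  induction r as [|y r IH]; intros x k Hk; (destruct k as [|k]; [simpl in Hk; lia|]).
  - destruct x; simpl; destruct k; reflexivity.
  - destruct x.
    + change (fsel true (true :: y :: r)) with (flag true (y :: r) :: fsel true (y :: r)).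
      change (fsel false (true :: y :: r)) with (fsel false (y :: r)).
      cbn [mrg]. replace (negb (flag true (y :: r))) with y by (destruct y; reflexivity).
      rewrite IH; [reflexivity| simpl in *; lia].
    + change (fsel true (false :: y :: r)) with (fsel true (y :: r)).
      change (fsel false (false :: y :: r)) with (flag false (y :: r) :: fsel false (y :: r)).
      cbn [mrg]. replace (flag false (y :: r)) with y by (destruct y; reflexivity).
      rewrite IH; [reflexivity| simpl in *; lia].
Qed.

Definition okl (l : list bool) : Prop := l = [] \/ last l false = true.

Lemma okl_tail : forall b l, okl (b :: l) -> okl l.
Proof.
  intros b l [H|H]; [discriminate|]. destruct l; [left; reflexivity|right; exact H].
Qed.

Lemma okl_cnt : forall l, okl l -> l <> [] -> (1 <= cnt l)%nat.
Proof.
  induction l as [|b l IH]; intros Ho Hn; [congruence|].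
  destruct l as [|c l].
  - destruct Ho as [H|H]; [discriminate|]. simpl in H. subst. simpl. lia.
  - assert (1 <= cnt (c :: l))%nat by (apply IH; [eapply okl_tail; eauto|discriminate]).
    simpl in *. destruct b; lia.
Qed.

Definition Wst (c : bool) (fa fb : list bool) : Prop :=
  (fa = [] /\ fb = []) \/
  ((if c then fa <> [] /\ cnt fa = cnt fb else fb <> [] /\ cnt fb = S (cnt fa))
   /\ okl fa /\ okl fb).

Lemma mrg_start : forall k (c : bool) (fa fb : list bool), (1 <= k)%nat ->
  (if c then fa <> [] else fb <> []) -> exists w, mrg k c fa fb = c :: w.
Proof.
  intros k c fa fb Hk H. destruct k as [|k]; [lia|].
  destruct c; simpl.
  - destruct fa; [congruence|]. eauto.
  - destruct fb; [congruence|]. eauto.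
Qed.

Lemma mrg_nil : forall k c, mrg k c [] [] = [].
Proof. intros [|k] [|]; reflexivity. Qed.

Lemma fsel_mrg : forall k c fa fb, (length fa + length fb <= k)%nat -> Wst c fa fb ->
  fsel true (mrg k c fa fb) = fa /\ fsel false (mrg k c fa fb) = fb.
Proof.
  induction k as [|k IH]; intros c fa fb Hl Hw.
  - destruct fa; [|simpl in Hl; lia]. destruct fb; [|simpl in Hl; lia]. simpl. auto.
  - destruct Hw as [[-> ->]|[Hc [Ha Hb]]]; [rewrite mrg_nil; auto|].
    destruct c.
    + destruct fa as [|f fa']; [destruct Hc; congruence|]. destruct Hc as [_ Hc].
      simpl mrg.
      assert (Hw' : Wst (negb f) fa' fb /\ (negb f = false -> fb <> []) /\ (negb f = true -> fa' <> [])).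
      { destruct f; simpl.
        - assert (fb <> []) by (intro; subst; simpl in Hc; lia).
          split; [right; split; [split; [auto|simpl in Hc; lia]|split; [eapply okl_tail; eauto|auto]]|].
          split; [auto|discriminate].
        - assert (fa' <> []) by (intro; subst; destruct Ha as [Ha|Ha]; simpl in Ha; discriminate).
          split; [right; split; [split; [auto|simpl in Hc; lia]|split; [eapply okl_tail; eauto|auto]]|].
          split; [discriminate|auto]. }
      destruct Hw' as [Hw' [H1 H2]].
      simpl in Hl. destruct (IH (negb f) fa' fb ltac:(lia) Hw') as [IH1 IH2].
      destruct (mrg_start k (negb f) fa' fb) as [w Hw].
      { destruct f; simpl in *; [specialize (H1 eq_refl); destruct fb; [congruence|simpl in Hl; lia]|specialize (H2 eq_refl); destruct fa'; [congruence|simpl in Hl; lia]]. }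
      { destruct f; simpl; [apply H1|apply H2]; reflexivity. }
      rewrite Hw in *. split.
      * change (fsel true (true :: negb f :: w)) with (flag true (negb f :: w) :: fsel true (negb f :: w)).
        rewrite IH1. destruct f; reflexivity.
      * change (fsel false (true :: negb f :: w)) with (fsel false (negb f :: w)). exact IH2.
    + destruct fb as [|g fb']; [destruct Hc; congruence|]. destruct Hc as [_ Hc].
      simpl mrg. simpl in Hl.
      destruct g.
      * assert (Hw' : Wst true fa fb').
        { destruct fa as [|f fa'].
          - destruct fb' as [|z fb'']; [left; auto|].
            exfalso. assert (1 <= cnt (z :: fb''))%nat by (apply okl_cnt; [eapply okl_tail; eauto|discriminate]).
            simpl in Hc. simpl in H. lia.
          - right. split; [split; [discriminate|simpl in Hc; simpl; lia]|split; [auto|eapply okl_tail; eauto]]. }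
        destruct (IH true fa fb' ltac:(lia) Hw') as [IH1 IH2].
        destruct Hw' as [[-> ->]|[[Hn _] _]]; [rewrite mrg_nil; split; reflexivity|].
        destruct (mrg_start k true fa fb') as [w Hw]; [destruct fa; [congruence|simpl in Hl; lia]|auto|].
        rewrite Hw in *. split.
        -- change (fsel true (false :: true :: w)) with (fsel true (true :: w)). exact IH1.
        -- change (fsel false (false :: true :: w)) with (flag false (true :: w) :: fsel false (true :: w)).
           rewrite IH2. reflexivity.
      * assert (Hn : fb' <> []) by (intro; subst; destruct Hb as [Hb|Hb]; simpl in Hb; discriminate).
        assert (Hw' : Wst false fa fb').
        { right. split; [split; [auto|simpl in Hc; lia]|split; [auto|eapply okl_tail; eauto]]. }
        destruct (IH false fa fb' ltac:(lia) Hw') as [IH1 IH2].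
        destruct (mrg_start k false fa fb') as [w Hw]; [destruct fb'; [congruence|simpl in Hl; lia]|auto|].
        rewrite Hw in *. split.
        -- change (fsel true (false :: false :: w)) with (fsel true (false :: w)). exact IH1.
        -- change (fsel false (false :: false :: w)) with (flag false (false :: w) :: fsel false (false :: w)).
           rewrite IH2. reflexivity.
Qed.

Fixpoint tf (l : list bool) : nat :=
  match l with [] => 0
  | b :: r => ((if b then match r with c :: _ => if c then 0 else 1 | [] => 0 end else 0) + tf r)%nat
  end.

Lemma ft_negb : forall l, ft (map negb l) = tf l.
Proof.
  induction l as [|b l IH]; [reflexivity|].
  destruct l as [|c l]; [destruct b; reflexivity|].
  change (ft (negb b :: map negb (c :: l)) = tf (b :: c :: l)).
  cbn [ft tf map] in *. rewrite IH. destruct b, c; reflexivity.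
Qed.

Lemma ft_tf : forall l b, (ft (b :: l) + b2n b = tf (b :: l) + b2n (last (b :: l) b))%nat.
Proof.
  induction l as [|c l IH]; intros b; [destruct b; reflexivity|].
  specialize (IH c). change (last (b :: c :: l) b) with (last (c :: l) b).
  replace (last (c :: l) b) with (last (c :: l) c) by (apply last_indep; discriminate).
  cbn [ft tf] in *. destruct b, c; simpl in *; lia.
Qed.

Lemma ft_true_cons : forall l, ft (true :: l) = ft l.
Proof. intros l. reflexivity. Qed.

Lemma tf_false_cons : forall l, tf (false :: l) = tf l.
Proof. intros l. reflexivity. Qed.

Lemma ft_snoc_false : forall l, ft (l ++ [false]) = ft l.
Proof.
  induction l as [|b l IH]; [reflexivity|].
  destruct l as [|c l]; [destruct b; reflexivity|].
  change (ft (b :: (c :: l) ++ [false]) = ft (b :: c :: l)).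
  cbn [ft app] in *. rewrite <- IH. reflexivity.
Qed.

Lemma tf_snoc_true : forall l, tf (l ++ [true]) = tf l.
Proof.
  induction l as [|b l IH]; [reflexivity|].
  destruct l as [|c l]; [destruct b; reflexivity|].
  change (tf (b :: (c :: l) ++ [true]) = tf (b :: c :: l)).
  cbn [tf app] in *. rewrite <- IH. reflexivity.
Qed.

Lemma ft_snoc_ft : forall l, ft (l ++ [false; true]) = S (ft l).
Proof.
  induction l as [|b l IH]; [reflexivity|].
  destruct l as [|c l]; [destruct b; reflexivity|].
  change (ft (b :: (c :: l) ++ [false; true]) = S (ft (b :: c :: l))).
  cbn [ft app] in *. rewrite IH. lia.
Qed.

Lemma map_negb_negb : forall l, map negb (map negb l) = l.
Proof. induction l as [|b l IH]; [reflexivity|]. simpl. rewrite IH, Bool.negb_involutive. reflexivity. Qed.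

Lemma XA : forall h, ft (false :: map negb h ++ [true]) = S (ft h).
Proof.
  intros h.
  replace (false :: map negb h ++ [true]) with (map negb (true :: h ++ [false]))
    by (simpl; rewrite map_app; reflexivity).
  rewrite ft_negb.
  pose proof (ft_tf (h ++ [false]) true) as E.
  replace (last (true :: h ++ [false]) true) with false in E
    by (rewrite app_comm_cons, last_last; reflexivity).
  rewrite ft_true_cons, ft_snoc_false in E. simpl b2n in E. lia.
Qed.

Lemma XB : forall g, ft (false :: g ++ [true]) = S (ft (map negb g)).
Proof.
  intros g. rewrite ft_negb.
  pose proof (ft_tf (g ++ [true]) false) as E.
  replace (last (false :: g ++ [true]) false) with true in E
    by (rewrite app_comm_cons, last_last; reflexivity).
  rewrite tf_false_cons, tf_snoc_true in E. simpl b2n in E. lia.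
Qed.

Lemma firstn_len_app : forall (l m : list bool), firstn (length l) (l ++ m) = l.
Proof. induction l as [|b l IH]; intros m; [reflexivity|]. simpl. rewrite IH. reflexivity. Qed.

Lemma exc_last : forall e h, (1 <= h)%nat \/ hd false e = true ->
  first_ret_aux (Z.of_nat h) e = true -> last e true = false.
Proof.
  induction e as [|x r IH]; intros h Hpre H; [discriminate|].
  destruct x.
  - simpl in H. replace (Z.of_nat h + 1)%Z with (Z.of_nat (S h)) in H by lia.
    replace (Z.of_nat (S h) =? 0)%Z with false in H by (symmetry; apply Z.eqb_neq; lia).
    destruct r as [|y r']; [discriminate|].
    change (last (true :: y :: r') true) with (last (y :: r') true).
    apply (IH (S h)); [left; lia|exact H].
  - destruct Hpre as [Hh|Hh]; [|discriminate].
    simpl in H. destruct (Nat.eq_dec h 1) as [->|Hne].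
    + simpl in H. destruct r; [reflexivity|discriminate].
    + replace (Z.of_nat h + -1)%Z with (Z.of_nat (h - 1)) in H by lia.
      replace (Z.of_nat (h - 1) =? 0)%Z with false in H by (symmetry; apply Z.eqb_neq; lia).
      destruct r as [|y r']; [discriminate|].
      change (last (false :: y :: r') true) with (last (y :: r') true).
      apply (IH (h - 1)%nat); [left; lia|exact H].
Qed.

Lemma cnt_firstn_le : forall k l, (cnt (firstn k l) <= k)%nat.
Proof.
  induction k as [|k IH]; intros [|b l]; simpl; try lia. specialize (IH l). destruct b; lia.
Qed.

Lemma cnt_firstn_negb : forall k l, (k <= length l)%nat ->
  cnt (firstn k (map negb l)) = (k - cnt (firstn k l))%nat.
Proof.
  intros k l Hk. rewrite firstn_map, cnt_map_negb, firstn_length_le by exact Hk. reflexivity.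
Qed.

Lemma firstn_app_le' : forall k (l m : list bool), (k <= length l)%nat -> firstn k (l ++ m) = firstn k l.
Proof.
  intros k l m Hk. rewrite firstn_app. replace (k - length l)%nat with 0%nat by lia.
  simpl. rewrite app_nil_r. reflexivity.
Qed.

Lemma LK_G : forall ga hb, length ga = length hb ->
  G 0 true (false :: ga) (hb ++ [true]) ->
  G 0 true (false :: map negb hb) (map negb ga ++ [true]).
Proof.
  intros ga hb Hl HG t H1 H2 H3.
  rewrite length_app, length_map in H2. simpl in H2.
  destruct t as [|t]; [lia|].
  specialize (HG (S t) H1 ltac:(rewrite length_app; simpl; lia) ltac:(lia)).
  rewrite Nat.sub_0_r in *. replace (S t - 1)%nat with t in * by lia.
  simpl firstn in *. cbn [cnt] in *. simpl b2n in *.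
  rewrite firstn_app_le' in HG by lia.
  rewrite firstn_app_le' by (rewrite length_map; lia).
  rewrite !cnt_firstn_negb by lia.
  pose proof (cnt_firstn_le t hb). lia.
Qed.

Definition LKa (fa fb : list bool) : list bool := false :: map negb (removelast fb).
Definition LKb (fa fb : list bool) : list bool := map negb (tl fa) ++ [true].
Definition Fp (e : list bool) : list bool :=
  mrg (length e) true (LKa (fsel true e) (fsel false e)) (LKb (fsel true e) (fsel false e)).

Lemma runs_split : forall e, runs e = (cnt (fsel true e) + cnt (fsel false e))%nat.
Proof. intros e. rewrite runs_Tr, cnt_split. reflexivity. Qed.

Lemma longruns_split : forall e, longruns e = (ft (fsel true e) + ft (fsel false e))%nat.
Proof. intros e. rewrite longruns_Tr, ft_split. reflexivity. Qed.

Lemma Fp_props : forall e, excursion e = true -> hd false e = true -> (4 <= length e)%nat ->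
  length (Fp e) = length e /\ excursion (Fp e) = true /\ hd false (Fp e) = true /\
  runs (Fp e) = (length e - runs e)%nat /\ longruns (Fp e) = longruns e /\ Fp (Fp e) = e.
Proof.
  intros e Hex Hhd H4.
  unfold excursion in Hex. change 0%Z with (Z.of_nat 0) in Hex.
  pose proof Hex as Hex'.
  apply (char e 0 (or_intror Hhd)) in Hex. destruct Hex as [Hne [Hlen HG]].
  rewrite Hhd in HG.
  pose proof (exc_last e 0 (or_intror Hhd) Hex') as Hlast.
  pose proof (len_split e) as Hls.
  destruct e as [|x r]; [congruence|]. simpl in Hhd; subst x.
  pose proof (cnt_ends r true) as Hce. rewrite Hlast in Hce. simpl b2n in Hce.
  pose proof (fsel_last true (true :: r)) as Hoka.
  pose proof (fsel_last false (true :: r)) as Hokb.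
  pose proof (mrg_flags r true (length (true :: r)) (le_n _)) as Hmf.
  unfold Fp.
  remember (fsel true (true :: r)) as fa eqn:Efa.
  remember (fsel false (true :: r)) as fb eqn:Efb.
  set (L := length (true :: r)) in *.
  destruct fa as [|f ga]; [simpl in *; lia|].
  assert (f = false).
  { refine (_ (HG 1%nat _ _ _)); [|lia|simpl in *; lia|lia].
    simpl. destruct f; simpl; lia. }
  subst f.
  assert (Hfb : fb = removelast fb ++ [true]).
  { assert (Hfbn : fb <> []) by (intro Hc; rewrite Hc in *; simpl in *; lia).
    specialize (Hokb Hfbn). rewrite <- Hokb. apply app_removelast_last. exact Hfbn. }
  set (hb := removelast fb) in *.
  assert (Hga : ga = removelast ga ++ [true]).
  { assert (ga <> []) by (intro Hc; rewrite Hc in *; simpl in *; lia).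
    specialize (Hoka ltac:(discriminate)).
    replace (last (false :: ga) false) with (last ga false) in Hoka
      by (destruct ga; [congruence|reflexivity]).
    rewrite <- Hoka. apply app_removelast_last. auto. }
  set (ga' := removelast ga) in *.
  assert (Hlhb : length hb = length ga).
  { rewrite Hfb in Hlen. rewrite length_app in Hlen. simpl in Hlen. lia. }
  assert (Hhb : hb = removelast hb ++ [last hb false]).
  { apply app_removelast_last. intro Hc. rewrite Hc in Hlhb. rewrite Hga in Hlhb.
    rewrite length_app in Hlhb. simpl in Hlhb. lia. }
  set (hb' := removelast hb) in *. set (z := last hb false) in *.
  assert (Hl' : length hb' = length ga').
  { rewrite Hhb, Hga, !length_app in Hlhb. simpl in Hlhb. lia. }
  rewrite Hfb in Hce. rewrite Hga in Hce. rewrite Hhb in Hce.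
  cbn [cnt] in Hce. rewrite !cnt_app in Hce. cbn [cnt] in Hce.
  assert (Hz : z = false).
  { refine (_ (HG (S (length ga')) _ _ _)); [|lia| |lia].
    - rewrite Nat.sub_0_r. replace (S (length ga') - 1)%nat with (length hb') by lia.
      rewrite Hga, Hfb, Hhb. simpl firstn. rewrite firstn_len_app.
      rewrite <- app_assoc, firstn_len_app. cbn [cnt]. simpl b2n.
      destruct z; simpl in *; lia.
    - rewrite Hfb, Hhb, !length_app. simpl. lia. }
  rewrite Hz in *. clear Hz.
  assert (Hc1 : cnt ga' = cnt hb') by (simpl in Hce; lia).
  assert (ELa : LKa (false :: ga) fb = false :: map negb hb' ++ [true]).
  { unfold LKa. fold hb. rewrite Hhb. rewrite map_app. reflexivity. }
  assert (ELb : LKb (false :: ga) fb = map negb ga' ++ [false; true]).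
  { unfold LKb. simpl tl. rewrite Hga, map_app, <- app_assoc. reflexivity. }
  rewrite ELa, ELb.
  set (fa' := false :: map negb hb' ++ [true]).
  set (fb' := map negb ga' ++ [false; true]).
  assert (HL : L = (2 * length ga' + 4)%nat).
  { rewrite <- Hls, Hfb, Hga, Hhb. simpl. rewrite !length_app. simpl. lia. }
  assert (Hlfa' : length fa' = (length ga' + 2)%nat) by (unfold fa'; simpl; rewrite length_app, length_map; simpl; lia).
  assert (Hlfb' : length fb' = (length ga' + 2)%nat) by (unfold fb'; rewrite length_app, length_map; simpl; lia).
  assert (Hcfa' : cnt fa' = (length ga' - cnt ga' + 1)%nat).
  { unfold fa'. cbn [cnt]. rewrite cnt_app, cnt_map_negb. simpl. lia. }
  assert (Hcfb' : cnt fb' = (length ga' - cnt ga' + 1)%nat).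
  { unfold fb'. rewrite cnt_app, cnt_map_negb. simpl. lia. }
  assert (HW : Wst true fa' fb').
  { right. split; [split; [unfold fa'; discriminate|lia]|split; right].
    - unfold fa'. rewrite app_comm_cons, last_last. reflexivity.
    - unfold fb'. replace [false; true] with ([false] ++ [true]) by reflexivity.
      rewrite app_assoc, last_last. reflexivity. }
  destruct (fsel_mrg L true fa' fb' ltac:(lia) HW) as [Hs1 Hs2].
  destruct (mrg_start L true fa' fb') as [w Hw]; [lia|unfold fa'; discriminate|].
  pose proof (len_split (mrg L true fa' fb')) as Hlm. rewrite Hs1, Hs2 in Hlm.
  assert (HG' : G 0 true fa' fb').
  { unfold fa', fb'. replace (map negb ga' ++ [false; true]) with (map negb (ga' ++ [true]) ++ [true])
      by (rewrite map_app, <- app_assoc; reflexivity).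
    rewrite <- Hga. replace (false :: map negb hb' ++ [true]) with (false :: map negb hb) by (rewrite Hhb, map_app; reflexivity).
    apply LK_G; [congruence|]. rewrite <- Hfb. exact HG. }
  split; [lia|]. split.
  { unfold excursion. change 0%Z with (Z.of_nat 0).
    assert (Hhd' : hd false (mrg L true fa' fb') = true) by (rewrite Hw; reflexivity).
    apply (proj2 (char _ 0 (or_intror Hhd'))).
    rewrite Hs1, Hs2, Hw. simpl hd. split; [discriminate|split; [lia|exact HG']]. }
  split; [rewrite Hw; reflexivity|].
  split.
  { rewrite !runs_split, Hs1, Hs2, <- Efa, <- Efb, Hcfa', Hcfb'.
    assert (E1 : cnt (false :: ga) = S (cnt ga')) by (rewrite Hga; cbn [cnt]; rewrite cnt_app; simpl; lia).
    assert (E2 : cnt fb = S (cnt hb')) by (rewrite Hfb, Hhb, <- app_assoc, cnt_app; simpl; lia).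
    rewrite E1, E2. pose proof (cnt_le ga'). lia. }
  split.
  { rewrite !longruns_split, Hs1, Hs2, <- Efa, <- Efb.
    unfold fa', fb'. rewrite XA, ft_snoc_ft.
    rewrite Hga, Hfb, Hhb. rewrite <- app_assoc. simpl app. rewrite XB, ft_snoc_ft. lia. }
  { rewrite Hs1, Hs2. replace (length (mrg L true fa' fb')) with L by lia.
    replace (LKa fa' fb') with (false :: ga).
    2:{ unfold LKa, fb'. rewrite Hga. replace (map negb ga' ++ [false; true]) with ((map negb ga' ++ [false]) ++ [true]) by (rewrite <- app_assoc; reflexivity).
        rewrite removelast_last, map_app, map_negb_negb. reflexivity. }
    replace (LKb fa' fb') with fb.
    2:{ unfold LKb, fa'. simpl tl. rewrite map_app, map_negb_negb. simpl. rewrite Hfb, Hhb, <- app_assoc. reflexivity. }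
    exact Hmf. }
Qed.

Lemma fra_negb : forall e x, first_ret_aux (- x) (map negb e) = first_ret_aux x e.
Proof.
  induction e as [|b r IH]; intros x; [reflexivity|].
  cbn [map first_ret_aux].
  replace (- x + (if negb b then 1 else -1))%Z with (- (x + (if b then 1 else -1)))%Z
    by (destruct b; simpl; lia).
  set (y := (x + (if b then 1 else -1))%Z).
  replace (- y =? 0)%Z with (y =? 0)%Z by (destruct (Z.eqb_spec y 0); destruct (Z.eqb_spec (-y) 0); lia).
  destruct (y =? 0)%Z; [destruct r; reflexivity|apply IH].
Qed.

Lemma exc_negb : forall e, excursion (map negb e) = excursion e.
Proof. intros e. unfold excursion. apply (fra_negb e 0%Z). Qed.

Lemma rl_aux_negb : forall r cur len, rl_aux (negb cur) len (map negb r) = rl_aux cur len r.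
Proof.
  induction r as [|y r IH]; intros cur len; [reflexivity|].
  cbn [map rl_aux]. replace (Bool.eqb (negb y) (negb cur)) with (Bool.eqb y cur) by (destruct y, cur; reflexivity).
  destruct (Bool.eqb y cur); rewrite IH; reflexivity.
Qed.

Lemma rlen_negb : forall e, run_lengths (map negb e) = run_lengths e.
Proof. intros [|x r]; [reflexivity|]. apply rl_aux_negb. Qed.

Lemma runs_negb : forall e, runs (map negb e) = runs e.
Proof. intros e. unfold runs. rewrite rlen_negb. reflexivity. Qed.

Lemma longruns_negb : forall e, longruns (map negb e) = longruns e.
Proof. intros e. unfold longruns. rewrite rlen_negb. reflexivity. Qed.

Definition F (e : list bool) : list bool :=
  match e with
  | [] => []
  | true :: _ => Fp e
  | false :: _ => map negb (Fp (map negb e))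
  end.

Lemma F_props : forall e, excursion e = true -> (4 <= length e)%nat ->
  length (F e) = length e /\ excursion (F e) = true /\
  runs (F e) = (length e - runs e)%nat /\ longruns (F e) = longruns e /\ F (F e) = e.
Proof.
  intros [|x r] Hex H4; [simpl in H4; lia|].
  destruct x.
  - destruct (Fp_props (true :: r) Hex eq_refl H4) as [H1 [H2 [H3 [H5 [H6 H7]]]]].
    change (F (true :: r)) with (Fp (true :: r)).
    split; [auto|split; [auto|split; [auto|split; [auto|]]]].
    destruct (Fp (true :: r)) as [|y w] eqn:E; [discriminate|]. simpl in H3. subst y.
    change (F (true :: w)) with (Fp (true :: w)). exact H7.
  - set (e := map negb (false :: r)).
    assert (Hex' : excursion e = true) by (unfold e; rewrite exc_negb; exact Hex).
    assert (H4' : (4 <= length e)%nat) by (unfold e; rewrite length_map; exact H4).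
    destruct (Fp_props e Hex' eq_refl H4') as [H1 [H2 [H3 [H5 [H6 H7]]]]].
    change (F (false :: r)) with (map negb (Fp e)).
    rewrite length_map, exc_negb, runs_negb, longruns_negb, H1, H5, H6.
    unfold e. rewrite length_map, runs_negb, longruns_negb.
    split; [auto|split; [auto|split; [auto|split; [auto|]]]].
    fold e. destruct (Fp e) as [|y w] eqn:E; [discriminate|]. simpl in H3. subst y.
    change (F (map negb (true :: w))) with (map negb (Fp (map negb (map negb (true :: w))))).
    rewrite map_negb_negb, H7. unfold e. apply map_negb_negb.
Qed.

Lemma In_bools : forall m e, In e (bools m) <-> length e = m.
Proof.
  induction m as [|m IH]; intros e.
  - simpl. split; [intros [<-|[]]; reflexivity|]. destruct e; [auto|discriminate].
  - simpl. rewrite in_app_iff, !in_map_iff. split.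
    + intros [[x [<- Hx]]|[x [<- Hx]]]; apply IH in Hx; simpl; lia.
    + destruct e as [|b e]; [discriminate|]. intros H. injection H as H.
      destruct b; [left|right]; exists e; split; auto; apply IH; auto.
Qed.

Lemma NoDup_bools : forall m, NoDup (bools m).
Proof.
  induction m as [|m IH]; simpl; [constructor; [auto|constructor]|].
  apply NoDup_app.
  - apply FinFun.Injective_map_NoDup; [intros x y H; injection H; auto|exact IH].
  - apply FinFun.Injective_map_NoDup; [intros x y H; injection H; auto|exact IH].
  - intros x Hx Hy. apply in_map_iff in Hx, Hy. destruct Hx as [a [<- _]]. destruct Hy as [b [Hb _]]. discriminate.
Qed.

Lemma NoDup_map_on : forall (f : list bool -> list bool) X, NoDup X ->
  (forall x y, In x X -> In y X -> f x = f y -> x = y) -> NoDup (map f X).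
Proof.
  intros f X HX. induction HX as [|x X Hx HX IH]; intros Hinj; simpl; constructor.
  - intros Hin. apply in_map_iff in Hin. destruct Hin as [y [Hy HyX]].
    assert (y = x) by (apply Hinj; simpl; auto). subst. contradiction.
  - apply IH. intros a b Ha Hb. apply Hinj; simpl; auto.
Qed.

Lemma perm_inv : forall (F : list bool -> list bool) X Y, NoDup X -> NoDup Y ->
  (forall x, In x X -> In (F x) Y) -> (forall y, In y Y -> In (F y) X) ->
  (forall x, In x X -> F (F x) = x) -> (forall y, In y Y -> F (F y) = y) ->
  Permutation Y (map F X).
Proof.
  intros F X Y HX HY H1 H2 H3 H4.
  apply NoDup_Permutation; [exact HY| |].
  - apply NoDup_map_on; [exact HX|]. intros x y Hx Hy E.
    rewrite <- (H3 x Hx), <- (H3 y Hy), E. reflexivity.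
  - intros y. rewrite in_map_iff. split.
    + intros Hy. exists (F y). split; [apply H4; auto|apply H2; auto].
    + intros [x [<- Hx]]. apply H1; auto.
Qed.

Lemma runs_le : forall e, (runs e <= length e)%nat.
Proof. intros e. rewrite runs_Tr, <- (Tr_length e). apply cnt_le. Qed.

Lemma count_eq : forall n k l, (2 <= n)%nat ->
  length (filter (fun e => excursion e && Nat.eqb (runs e) (2 * k) && Nat.eqb (longruns e) l) (bools (2 * n)))
  = length (filter (fun e => excursion e && Nat.eqb (length e - runs e) (2 * k) && Nat.eqb (longruns e) l) (bools (2 * n))).
Proof.
  intros n k l Hn.
  set (P := fun e => excursion e && Nat.eqb (runs e) (2 * k) && Nat.eqb (longruns e) l).
  set (Q := fun e => excursion e && Nat.eqb (length e - runs e) (2 * k) && Nat.eqb (longruns e) l).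
  assert (HP : forall e, In e (filter P (bools (2 * n))) -> excursion e = true /\ length e = (2 * n)%nat /\ runs e = (2 * k)%nat /\ longruns e = l).
  { intros e He. apply filter_In in He. destruct He as [He1 He2]. apply In_bools in He1.
    unfold P in He2. apply andb_prop in He2 as [He2 He4]. apply andb_prop in He2 as [He2 He3].
    apply Nat.eqb_eq in He3, He4. auto. }
  assert (HQ : forall e, In e (filter Q (bools (2 * n))) -> excursion e = true /\ length e = (2 * n)%nat /\ (length e - runs e = 2 * k)%nat /\ longruns e = l).
  { intros e He. apply filter_In in He. destruct He as [He1 He2]. apply In_bools in He1.
    unfold Q in He2. apply andb_prop in He2 as [He2 He4]. apply andb_prop in He2 as [He2 He3].
    apply Nat.eqb_eq in He3, He4. auto. }
  symmetry. rewrite <- (length_map F (filter P (bools (2 * n)))).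
  apply Permutation_length. apply perm_inv.
  - apply NoDup_filter, NoDup_bools.
  - apply NoDup_filter, NoDup_bools.
  - intros x Hx. destruct (HP x Hx) as [A [B [C D]]].
    destruct (F_props x A ltac:(lia)) as [F1 [F2 [F3 [F4 F5]]]].
    apply filter_In. split; [apply In_bools; lia|].
    unfold Q. rewrite F2, F1, F3, F4. pose proof (runs_le x).
    replace (length x - (length x - runs x))%nat with (runs x) by lia.
    rewrite C, D, !Nat.eqb_refl. reflexivity.
  - intros x Hx. destruct (HQ x Hx) as [A [B [C D]]].
    destruct (F_props x A ltac:(lia)) as [F1 [F2 [F3 [F4 F5]]]].
    apply filter_In. split; [apply In_bools; lia|].
    unfold P. rewrite F2, F3, F4, C, D, !Nat.eqb_refl. reflexivity.
  - intros x Hx. destruct (HP x Hx) as [A [B [C D]]]. apply (F_props x A ltac:(lia)).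
  - intros x Hx. destruct (HQ x Hx) as [A [B [C D]]]. apply (F_props x A ltac:(lia)).
Qed.

Lemma cnt_Tr_le : forall e, (cnt (Tr e) <= length e)%nat.
Proof. intros e. rewrite <- (Tr_length e). apply cnt_le. Qed.

Lemma cnt_Tr_pos : forall x r, (1 <= cnt (Tr (x :: r)))%nat.
Proof.
  intros x r. revert x. induction r as [|y r IH]; intros x; [simpl; lia|].
  specialize (IH y). cbn [Tr] in *. cbn [cnt] in *. destruct (flag x (y :: r)); lia.
Qed.

Lemma wt_Tr : forall a r x, wt_aux a x r * (1 - a) =
  a ^ (length (x :: r) - cnt (Tr (x :: r))) * (1 - a) ^ (cnt (Tr (x :: r))).
Proof.
  intros a r. induction r as [|y r IH]; intros x.
  - simpl. ring.
  - cbn [wt_aux]. rewrite Rmult_assoc, IH.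
    pose proof (cnt_Tr_le (y :: r)) as Hle.
    change (Tr (x :: y :: r)) with (flag x (y :: r) :: Tr (y :: r)).
    cbn [cnt flag]. set (c := cnt (Tr (y :: r))) in *.
    change (length (x :: y :: r)) with (S (length (y :: r))) in *.
    set (L := length (y :: r)) in *.
    destruct (Bool.eqb y x) eqn:E.
    + replace (Bool.eqb x y) with true by (destruct x, y; simpl in *; congruence).
      simpl negb. change ((if false then 1%nat else 0%nat) + c)%nat with c.
      replace (S L - c)%nat with (S (L - c)) by lia.
      change (a ^ S (L - c)) with (a * a ^ (L - c)). ring.
    + replace (Bool.eqb x y) with false by (destruct x, y; simpl in *; congruence).
      simpl negb. change ((if true then 1%nat else 0%nat) + c)%nat with (S c).
      replace (S L - S c)%nat with (L - c)%nat by lia.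
      change ((1 - a) ^ S c) with ((1 - a) * (1 - a) ^ c). ring.
Qed.

Lemma weight_runs : forall a e, e <> [] ->
  weight a e * (1 - a) = / 2 * a ^ (length e - runs e) * (1 - a) ^ (runs e).
Proof.
  intros a [|x r] H; [congruence|]. unfold weight. rewrite Rmult_assoc, wt_Tr, runs_Tr. ring.
Qed.

Lemma sum_filter_const : forall (l : list (list bool)) (P : list bool -> bool) (w : list bool -> R) c K,
  (forall e, In e l -> P e = true -> c * w e = K) ->
  c * fold_right Rplus 0 (map (fun e => if P e then w e else 0) l) = K * INR (length (filter P l)).
Proof.
  induction l as [|e l IH]; intros P w c K H; [simpl; ring|].
  cbn [map fold_right].
  rewrite Rmult_plus_distr_l, (IH P w c K) by (intros; apply H; simpl; auto).
  destruct (P e) eqn:E.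
  - replace (filter P (e :: l)) with (e :: filter P l) by (simpl; rewrite E; reflexivity).
    rewrite (H e (or_introl eq_refl) E). cbn [length]. rewrite S_INR. ring.
  - replace (filter P (e :: l)) with (filter P l) by (simpl; rewrite E; reflexivity). ring.
Qed.

Lemma exc_nonnil : forall e, excursion e = true -> e <> [].
Proof. intros e H ->. discriminate. Qed.

Lemma part1 : forall (a : R), 0 < a < 1 ->
   forall n k l : nat, (2 <= n)%nat ->
     (1 - a) * Pfin a (2 * n)
        (fun e => excursion e && Nat.eqb (runs e) (2 * k)
                  && Nat.eqb (longruns e) l)
     = a * Pfin (1 - a) (2 * n)
        (fun e => excursion e && Nat.eqb (length e - runs e) (2 * k)
                  && Nat.eqb (longruns e) l).
Proof.
  intros a Ha n k l Hn. unfold Pfin.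
  set (K := / 2 * a ^ (2 * n - 2 * k) * (1 - a) ^ (2 * k)).
  rewrite (sum_filter_const _ _ _ (1 - a) K).
  2:{ intros e He HP. apply In_bools in He.
      apply andb_prop in HP as [HP H3]. apply andb_prop in HP as [HP H2].
      apply Nat.eqb_eq in H2, H3.
      rewrite Rmult_comm, weight_runs by (apply exc_nonnil; auto).
      rewrite He, H2. reflexivity. }
  rewrite (sum_filter_const _ _ _ a K).
  2:{ intros e He HP. apply In_bools in He.
      apply andb_prop in HP as [HP H3]. apply andb_prop in HP as [HP H2].
      apply Nat.eqb_eq in H2, H3.
      pose proof (weight_runs (1 - a) e (exc_nonnil e HP)) as W.
      replace (1 - (1 - a)) with a in W by ring.
      rewrite Rmult_comm, W. pose proof (runs_le e).
      rewrite H2. replace (runs e) with (2 * n - 2 * k)%nat by lia. unfold K. ring. }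
  rewrite count_eq by exact Hn. reflexivity.
Qed.

Lemma Csum_filter : forall (l : list (list bool)) (P : list bool -> bool) (g : list bool -> C),
  fold_right Cplus (RtoC 0) (map (fun e => if P e then g e else RtoC 0) l) =
  fold_right Cplus (RtoC 0) (map g (filter P l)).
Proof.
  induction l as [|e l IH]; intros P g; [reflexivity|].
  simpl. rewrite IH. destruct (P e); simpl; [reflexivity|]. apply Cplus_0_l.
Qed.

Lemma Csum_perm : forall (l1 l2 : list C), Permutation l1 l2 ->
  fold_right Cplus (RtoC 0) l1 = fold_right Cplus (RtoC 0) l2.
Proof.
  intros l1 l2 H. induction H; simpl.
  - reflexivity.
  - rewrite IHPermutation. reflexivity.
  - rewrite !Cplus_assoc, (Cplus_comm y x). reflexivity.
  - congruence.
Qed.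

Lemma wt_half : forall r x, wt_aux (/ 2) x r = (/ 2) ^ (length r).
Proof.
  induction r as [|y r IH]; intros x; [reflexivity|].
  cbn [wt_aux length]. rewrite IH.
  replace (if Bool.eqb y x then / 2 else 1 - / 2) with (/ 2) by (destruct (Bool.eqb y x); field).
  reflexivity.
Qed.

Lemma weight_half : forall e, e <> [] -> weight (/ 2) e = (/ 2) ^ (length e).
Proof.
  intros [|x r] H; [congruence|]. unfold weight. rewrite wt_half. reflexivity.
Qed.

Lemma exc_len : forall e, excursion e = true -> exists n, length e = (2 * n)%nat /\ (1 <= n)%nat.
Proof.
  assert (Hpos : forall e, excursion e = true -> hd false e = true -> exists n, length e = (2 * n)%nat /\ (1 <= n)%nat).
  { intros e Hex Hhd. unfold excursion in Hex. change 0%Z with (Z.of_nat 0) in Hex.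
    apply (char e 0 (or_intror Hhd)) in Hex. destruct Hex as [Hne [Hl _]].
    pose proof (len_split e). exists (length (fsel true e)). split; [lia|].
    destruct (length (fsel true e)) eqn:E; [|lia].
    destruct e; [congruence|]. cbn [length] in H. lia. }
  intros [|x r] Hex; [discriminate|].
  destruct x; [apply Hpos; auto|].
  destruct (Hpos (map negb (false :: r))) as [n [H1 H2]]; [rewrite exc_negb; auto|reflexivity|].
  exists n. rewrite length_map in H1. auto.
Qed.

Definition f1 (r s t : R) (e : list bool) : C :=
  Cmult (Cmult (expi (r * INR (runs e))) (expi (s * INR (longruns e)))) (expi (t * INR (length e))).
Definition f2 (r s t : R) (e : list bool) : C :=
  Cmult (Cmult (expi (r * (INR (length e) - INR (runs e)))) (expi (s * INR (longruns e))))
        (expi (t * INR (length e))).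

Lemma Eterm_ne2 : forall r s t m, m <> 2%nat ->
  Eterm (/ 2) (f1 r s t) m = Eterm (/ 2) (f2 r s t) m.
Proof.
  intros r s t m Hm. unfold Eterm. rewrite !Csum_filter.
  set (X := filter excursion (bools m)).
  assert (HX : forall e, In e X -> excursion e = true /\ length e = m /\ (4 <= length e)%nat).
  { intros e He. apply filter_In in He. destruct He as [He1 He2]. apply In_bools in He1.
    destruct (exc_len e He2) as [n [Hn1 Hn2]]. split; [auto|split; [auto|]].
    assert (n <> 1%nat) by (intro; subst; lia). lia. }
  assert (HP : Permutation X (map F X)).
  { apply perm_inv; try (apply NoDup_filter, NoDup_bools).
    - intros x Hx. destruct (HX x Hx) as [A [B C]]. destruct (F_props x A C) as [F1 [F2 _]].
      apply filter_In. split; [apply In_bools; lia|auto].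
    - intros x Hx. destruct (HX x Hx) as [A [B C]]. destruct (F_props x A C) as [F1 [F2 _]].
      apply filter_In. split; [apply In_bools; lia|auto].
    - intros x Hx. destruct (HX x Hx) as [A [B C]]. apply (F_props x A C).
    - intros x Hx. destruct (HX x Hx) as [A [B C]]. apply (F_props x A C). }
  rewrite (Csum_perm _ _ (Permutation_map (fun e => Cmult (RtoC (weight (/ 2) e)) (f1 r s t e)) HP)).
  rewrite map_map. f_equal. apply map_ext_in. intros e He.
  destruct (HX e He) as [A [B C]]. destruct (F_props e A C) as [F1 [F2 [F3 [F4 F5]]]].
  rewrite !weight_half by (apply exc_nonnil; auto). rewrite F1.
  unfold f1, f2. rewrite F1, F3, F4, minus_INR by apply runs_le. reflexivity.
Qed.

Lemma Eterm_2 : forall f, Eterm (/ 2) f 2 = Cmult (RtoC (/ 4)) (Cplus (f [true; false]) (f [false; true])).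
Proof.
  intros f. unfold Eterm. cbn.
  replace (/ 2 * ((1 - / 2) * 1)) with (/ 4) by field.
  ring.
Qed.

Lemma expi_0 : expi 0 = RtoC 1.
Proof. unfold expi. rewrite cos_0, sin_0. reflexivity. Qed.

Lemma Eterm_diff2 : forall r s t,
  Cminus (Eterm (/ 2) (f1 r s t) 2) (Eterm (/ 2) (f2 r s t) 2) =
  Cmult (RtoC (/ 2)) (Cmult (expi (2 * t)) (Cminus (expi (2 * r)) (RtoC 1))).
Proof.
  intros r s t. rewrite !Eterm_2. unfold f1, f2.
  assert (R1 : runs [true; false] = 2%nat) by reflexivity.
  assert (R2 : runs [false; true] = 2%nat) by reflexivity.
  assert (L1 : longruns [true; false] = 0%nat) by reflexivity.
  assert (L2 : longruns [false; true] = 0%nat) by reflexivity.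
  rewrite R1, R2, L1, L2. cbn [length].
  replace (r * INR 2) with (2 * r) by (simpl; ring).
  replace (t * INR 2) with (2 * t) by (simpl; ring).
  replace (r * (INR 2 - INR 2)) with 0 by ring.
  replace (s * INR 0) with 0 by (simpl; ring).
  rewrite expi_0.
  replace (RtoC (/ 4)) with (Cmult (RtoC (/ 2)) (RtoC (/ 2))) by (unfold RtoC, Cmult; simpl; f_equal; field).
  replace (RtoC (/ 2)) with (Cinv (RtoC 2)) by (unfold Cinv, RtoC; simpl; f_equal; field).
  field; unfold RtoC; intro H; injection H; lra.
Qed.

Definition sm (m : nat) (x : Z) : R :=
  fold_right Rplus 0 (map (fun e => if first_ret_aux x e then (/ 2) ^ m else 0) (bools m)).

Lemma Rsum_app : forall l1 l2, fold_right Rplus 0 (l1 ++ l2) = fold_right Rplus 0 l1 + fold_right Rplus 0 l2.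
Proof. induction l1 as [|a l1 IH]; intros l2; simpl; [ring|rewrite IH; ring]. Qed.

Lemma Rsum_scal : forall (l : list (list bool)) (g : list bool -> R) c,
  fold_right Rplus 0 (map (fun e => c * g e) l) = c * fold_right Rplus 0 (map g l).
Proof. induction l as [|a l IH]; intros g c; simpl; [ring|rewrite IH; ring]. Qed.

Lemma Rsum_zero : forall (l : list (list bool)) (g : list bool -> R),
  (forall e, In e l -> g e = 0) -> fold_right Rplus 0 (map g l) = 0.
Proof.
  induction l as [|a l IH]; intros g H; simpl; [ring|].
  rewrite H by (simpl; auto). rewrite IH by (intros; apply H; simpl; auto). ring.
Qed.

Lemma Rsum_nonneg : forall (l : list (list bool)) (g : list bool -> R),
  (forall e, 0 <= g e) -> 0 <= fold_right Rplus 0 (map g l).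
Proof. induction l as [|a l IH]; intros g H; simpl; [lra|]. pose proof (H a). specialize (IH g H). lra. Qed.

Definition phi (m : nat) (y : Z) : R := if (y =? 0)%Z then (if Nat.eqb m 0 then 1 else 0) else sm m y.

Lemma sm_S : forall m x, sm (S m) x = / 2 * (phi m (x + 1) + phi m (x + -1)).
Proof.
  intros m x. unfold sm at 1. cbn [bools]. rewrite map_app, Rsum_app, !map_map.
  rewrite Rmult_plus_distr_l. f_equal.
  - cbn [first_ret_aux]. unfold phi. destruct (x + 1 =? 0)%Z.
    + destruct m as [|m].
      * simpl. ring.
      * rewrite Rsum_zero; [simpl; ring|]. intros e He. apply In_bools in He.
        destruct e; [discriminate|reflexivity].
    + unfold sm. rewrite <- Rsum_scal. f_equal. apply map_ext. intros e.
      destruct (first_ret_aux (x + 1) e); simpl; ring.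
  - cbn [first_ret_aux]. unfold phi. destruct (x + -1 =? 0)%Z.
    + destruct m as [|m].
      * simpl. ring.
      * rewrite Rsum_zero; [simpl; ring|]. intros e He. apply In_bools in He.
        destruct e; [discriminate|reflexivity].
    + unfold sm. rewrite <- Rsum_scal. f_equal. apply map_ext. intros e.
      destruct (first_ret_aux (x + -1) e); simpl; ring.
Qed.

Lemma sm_nonneg : forall m x, 0 <= sm m x.
Proof.
  intros m x. unfold sm. apply Rsum_nonneg. intros e. destruct (first_ret_aux x e); [|lra].
  apply pow_le. lra.
Qed.

Lemma sum_ind0 : forall M, sum_f_R0 (fun i => if Nat.eqb i 0 then 1 else 0) M = 1.
Proof. induction M as [|M IH]; simpl; [reflexivity|]. rewrite IH. ring. Qed.

Lemma sm_bound : forall M x, 0 <= sum_f_R0 (fun m => sm m x) M <= 1.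
Proof.
  induction M as [|M IH]; intros x.
  - simpl. unfold sm. simpl. lra.
  - rewrite decomp_sum by lia. simpl pred.
    replace (sm 0 x) with 0 by (unfold sm; simpl; ring).
    rewrite (sum_eq _ (fun i => phi i (x + 1) * / 2 + phi i (x + -1) * / 2)) by (intros i _; rewrite sm_S; ring).
    rewrite sum_plus, <- !scal_sum.
    assert (Hphi : forall y, 0 <= sum_f_R0 (fun i => phi i y) M <= 1).
    { intros y. unfold phi. destruct (y =? 0)%Z.
      - rewrite sum_ind0. lra.
      - apply IH. }
    pose proof (Hphi (x + 1)%Z). pose proof (Hphi (x + -1)%Z). lra.
Qed.

Lemma ex_series_sm : ex_series (fun m => sm m 0%Z).
Proof.
  set (b := fun m => sm m 0%Z).
  assert (Hg : Un_growing (fun n => sum_f_R0 b n)).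
  { intros n. simpl. pose proof (sm_nonneg (S n) 0%Z). unfold b. lra. }
  assert (Hb : has_ub (fun n => sum_f_R0 b n)).
  { exists 1. intros x [i ->]. apply sm_bound. }
  destruct (growing_cv _ Hg Hb) as [l Hl].
  exists l. apply is_series_Reals. exact Hl.
Qed.

Lemma Cmod_expi : forall x, Cmod (expi x) = 1.
Proof.
  intros x. unfold Cmod, expi. cbn [fst snd].
  replace (cos x ^ 2 + sin x ^ 2) with 1 by (pose proof (sin2_cos2 x) as H; unfold Rsqr in H; simpl; lra).
  apply sqrt_1.
Qed.

Lemma Csum_bound : forall (l : list (list bool)) (g : list bool -> C) (h : list bool -> R),
  (forall e, In e l -> Cmod (g e) <= h e) ->
  Cmod (fold_right Cplus (RtoC 0) (map g l)) <= fold_right Rplus 0 (map h l).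
Proof.
  induction l as [|a l IH]; intros g h H; simpl.
  - rewrite Cmod_0. lra.
  - eapply Rle_trans; [apply Cmod_triangle|].
    apply Rplus_le_compat; [apply H; simpl; auto|apply IH; intros; apply H; simpl; auto].
Qed.

Lemma Eterm_bound : forall f m, (forall e, Cmod (f e) = 1) -> Cmod (Eterm (/ 2) f m) <= sm m 0%Z.
Proof.
  intros f m Hf. unfold Eterm, sm. apply Csum_bound. intros e He.
  apply In_bools in He. unfold excursion.
  destruct (first_ret_aux 0 e) eqn:E.
  - rewrite Cmod_mult, Cmod_R, Hf, weight_half by (intro; subst; discriminate).
    rewrite He, Rabs_pos_eq by (apply pow_le; lra). lra.
  - rewrite Cmod_0. lra.
Qed.

Lemma ex_series_Eterm : forall f, (forall e, Cmod (f e) = 1) -> ex_series (Eterm (/ 2) f).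
Proof.
  intros f Hf. apply (@ex_series_le C_AbsRing C_CompleteNormedModule _ (fun m => sm m 0%Z)); [|exact ex_series_sm].
  intros n. change (Cmod (Eterm (/ 2) f n) <= sm n 0%Z). apply Eterm_bound. exact Hf.
Qed.

Lemma Cmod_f1 : forall r s t e, Cmod (f1 r s t e) = 1.
Proof. intros. unfold f1. rewrite !Cmod_mult, !Cmod_expi. ring. Qed.
Lemma Cmod_f2 : forall r s t e, Cmod (f2 r s t e) = 1.
Proof. intros. unfold f2. rewrite !Cmod_mult, !Cmod_expi. ring. Qed.

Lemma sum_n_C2 : forall a : nat -> C, sum_n a 2 = Cplus (Cplus (a 0%nat) (a 1%nat)) (a 2%nat).
Proof. intros a. rewrite !sum_Sn, sum_O. reflexivity. Qed.

Lemma part2 : forall r s t : R,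
   exists S1 S2 : C,
     is_series (Eterm (/ 2) (fun e =>
        Cmult (Cmult (expi (r * INR (runs e))) (expi (s * INR (longruns e))))
              (expi (t * INR (length e))))) S1
     /\ is_series (Eterm (/ 2) (fun e =>
        Cmult (Cmult (expi (r * (INR (length e) - INR (runs e))))
                     (expi (s * INR (longruns e))))
              (expi (t * INR (length e))))) S2
     /\ Cminus S1 S2
        = Cmult (RtoC (/ 2)) (Cmult (expi (2 * t)) (Cminus (expi (2 * r)) (RtoC 1))).
Proof.
  intros r s t.
  change (fun e : list bool => Cmult (Cmult (expi (r * INR (runs e))) (expi (s * INR (longruns e))))
              (expi (t * INR (length e)))) with (f1 r s t).
  change (fun e : list bool => Cmult (Cmult (expi (r * (INR (length e) - INR (runs e))))
                     (expi (s * INR (longruns e)))) (expi (t * INR (length e)))) with (f2 r s t).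
  set (a1 := Eterm (/ 2) (f1 r s t)). set (a2 := Eterm (/ 2) (f2 r s t)).
  destruct (ex_series_Eterm (f1 r s t) (Cmod_f1 r s t)) as [S1 H1].
  set (v := Cminus (a1 2%nat) (a2 2%nat)).
  exists S1, (Cminus S1 v). split; [exact H1|]. split.
  - assert (E0 : a1 0%nat = a2 0%nat) by (unfold a1, a2; apply Eterm_ne2; lia).
    assert (E1 : a1 1%nat = a2 1%nat) by (unfold a1, a2; apply Eterm_ne2; lia).
    apply (is_series_decr_n a2 3); [lia|].
    apply (is_series_ext (fun k => a1 (3 + k)%nat)); [intros k; unfold a1, a2; apply Eterm_ne2; lia|].
    match goal with |- is_series _ ?L => assert (EL : L = plus S1 (opp (sum_n a1 (pred 3)))) end.
    { change (Cplus (Cminus S1 v) (Copp (sum_n a2 2)) = Cplus S1 (Copp (sum_n a1 2))).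
      rewrite !sum_n_C2. unfold v. rewrite E0, E1. ring. }
    rewrite EL. apply is_series_incr_n; [lia|].
    match goal with |- is_series _ ?L => assert (EL2 : L = S1) end.
    { change (Cplus (Cplus S1 (Copp (sum_n a1 2))) (sum_n a1 2) = S1). ring. }
    rewrite EL2. exact H1.
  - unfold v. rewrite <- (Eterm_diff2 r s t). fold a1 a2. ring.
Qed.

Theorem corollary2 :
  (forall (a : R), 0 < a < 1 ->
   forall n k l : nat, (2 <= n)%nat ->
     (1 - a) * Pfin a (2 * n)
        (fun e => excursion e && Nat.eqb (runs e) (2 * k)
                  && Nat.eqb (longruns e) l)
     = a * Pfin (1 - a) (2 * n)
        (fun e => excursion e && Nat.eqb (length e - runs e) (2 * k)
                  && Nat.eqb (longruns e) l))
  /\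
  (forall r s t : R,
   exists S1 S2 : C,
     is_series (Eterm (/ 2) (fun e =>
        Cmult (Cmult (expi (r * INR (runs e))) (expi (s * INR (longruns e))))
              (expi (t * INR (length e))))) S1
     /\ is_series (Eterm (/ 2) (fun e =>
        Cmult (Cmult (expi (r * (INR (length e) - INR (runs e))))
                     (expi (s * INR (longruns e))))
              (expi (t * INR (length e))))) S2
     /\ Cminus S1 S2
        = Cmult (RtoC (/ 2)) (Cmult (expi (2 * t)) (Cminus (expi (2 * r)) (RtoC 1)))).
Proof.
  split; [exact part1|exact part2].
Qed.
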